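(* Let $G$ be a simple graph with $n$ vertices, let $\theta_1(G),\ldots,\theta_n(G)$ be the eigenvalues of its Seidel matrix $S(G)$, and let $\theta_1(K_n),\ldots,\theta_n(K_n)$ be the eigenvalues of the Seidel matrix of the complete graph $K_n$. Then (i) $\theta_1(G)^2+\cdots+\theta_n(G)^2=(n-1)^2+n-1$; (ii) $\theta_1(G)^4+\cdots+\theta_n(G)^4\le \theta_1(K_n)^4+\cdots+\theta_n(K_n)^4=(n-1)^4+n-1$; (iii) $\max_{1\le i\le n}\theta_i(G)^2\le \max_{1\le i\le n}\theta_i(K_n)^2=(n-1)^2$.
   Context: For a simple graph $G$ with vertex set $\{v_1,\ldots,v_n\}$, the Seidel matrix $S(G)=(s_{ij})$ is the $n\times n$ matrix with $s_{ii}=0$ for all $i$, and for $i\ne j$, $s_{ij}=-1$ if $v_i$ and $v_j$ are adjacent and $s_{ij}=1$ otherwise. Its eigenvalues are real. $K_n$ denotes the complete graph on $n$ vertices, whose Seidel matrix is $I-J$. *)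

(* Defs.v *)
From mathcomp Require Import all_boot all_order all_algebra.
From mathcomp Require Import reals.
Set Implicit Arguments. Unset Strict Implicit. Unset Printing Implicit Defensive.
Import Order.TTheory GRing.Theory Num.Theory.
Local Open Scope ring_scope.

Definition simple_graph (n : nat) (adj : rel 'I_n) : Prop :=
  symmetric adj /\ irreflexive adj.

Definition seidel (R : pzRingType) (n : nat) (adj : rel 'I_n) : 'M[R]_n :=
  \matrix_(i, j) (if i == j then 0 else if adj i j then -1 else 1).

Definition complete_graph (n : nat) : rel 'I_n := fun i j => i != j.

(* Main.v *)
Require Import Defs.
From mathcomp Require Import all_boot all_order all_algebra.
From mathcomp Require Import reals.
From mathcomp Require Import ring lra.
Import Order.TTheory GRing.Theory Num.Theory.
Local Open Scope ring_scope.
Set Implicit Arguments. Unset Strict Implicit.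

Lemma comp_Xsq_inj (F : fieldType) (p r : {poly F}) :
  p \Po 'X^2 = r \Po 'X^2 -> p = r.
Proof.
move=> H; apply/polyP => i.
have := congr1 (fun s : {poly F} => s`_(2 * i)%N) H.
by rewrite /= !coef_comp_poly_Xn // dvdn_mulr // mulKn.
Qed.

Lemma char_poly_sq (F : fieldType) n (A : 'M[F]_n) (t : 'I_n -> F) :
  char_poly A = \prod_(i < n) ('X - (t i)%:P) ->
  char_poly (A *m A) = \prod_(i < n) ('X - (t i ^+ 2)%:P).
Proof.
move=> HA; apply: comp_Xsq_inj.
set q : {poly F} := 'X^2.
set mA := map_mx polyC A.
have E1 : (char_poly (A *m A)) \Po q = \det (q%:M - map_mx polyC (A *m A)).
  rewrite /char_poly -(det_map_mx (comp_poly q)); congr (\det _).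
  apply/matrixP => i j; rewrite /char_poly_mx !mxE.
  by rewrite raddfB /= raddfMn /= comp_polyX comp_polyC.
have E2 : q%:M - map_mx polyC (A *m A) = ('X%:M - mA) *m ('X%:M + mA).
  rewrite map_mxM -/mA mulmxDr !mulmxBl -scalar_mxM scalar_mxC.
  by rewrite /q expr2 addrA subrK.
have E3 : \det ('X%:M + mA) = \prod_(i < n) ('X + (t i)%:P).
  have -> : 'X%:M + mA = - (map_mx (comp_poly (- 'X)) (char_poly_mx A)).
    apply/matrixP => i j; rewrite /char_poly_mx !mxE.
    rewrite raddfB /= raddfMn /= comp_polyX comp_polyC.
    by rewrite opprB addrC -mulNrn opprK.
  rewrite -scaleN1r detZ det_map_mx -/(char_poly A) HA rmorph_prod /=.
  rewrite -{1}(card_ord n) -prodrN; apply: eq_bigr => i _.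
  by rewrite raddfB /= comp_polyX comp_polyC opprB opprK addrC.
rewrite E1 E2 det_mulmx -/(char_poly A) HA E3 -big_split /= rmorph_prod.
apply: eq_bigr => i _.
rewrite raddfB /= comp_polyX comp_polyC /q.
by rewrite rmorphXn /=; ring.
Qed.

Lemma trace_roots (F : fieldType) n (A : 'M[F]_n) (t : 'I_n -> F) :
  (0 < n)%N -> char_poly A = \prod_(i < n) ('X - (t i)%:P) ->
  \tr A = \sum_i t i.
Proof.
move=> n0 HA; have := char_poly_trace A n0; rewrite HA.
have E : \prod_(i < n) ('X - (t i)%:P) =
         \prod_(p <- [seq t i | i <- enum 'I_n]) ('X - p%:P).
  by rewrite big_map big_enum.
have Hs : size [seq t i | i <- enum 'I_n] = n by rewrite size_map size_enum_ord.
rewrite E -[in n.-1]Hs coefPn_prod_XsubC; last by rewrite Hs -lt0n.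
by rewrite big_map big_enum /= => /oppr_inj ->.
Qed.

Section Seidel.
Variable R : realType.

Lemma sum_eq1 n (i : 'I_n) : \sum_k (i == k)%:R = 1 :> R.
Proof.
rewrite (bigD1 i) //= eqxx big1 ?addr0 // => k /negbTE.
by rewrite eq_sym => ->.
Qed.

Lemma sum_neq n (i : 'I_n) : \sum_k (i != k)%:R = n%:R - 1 :> R.
Proof.
transitivity (\sum_(k < n) (1 - (i == k)%:R : R)).
  by apply: eq_bigr => k _; case: eqP => _ /=; rewrite ?subrr ?subr0.
by rewrite sumrB sum_eq1 sumr_const card_ord.
Qed.

Lemma sum_neq2 n (i j : 'I_n) : i != j ->
  \sum_k (i != k)%:R * (k != j)%:R = n%:R - 2 :> R.
Proof.
move=> ij.
transitivity (\sum_(k < n) (1 - (i == k)%:R - (j == k)%:R : R)).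
  apply: eq_bigr => k _.
  case: (eqVneq i k) => [<-|ik].
    by rewrite [j == i]eq_sym (negbTE ij) /=; ring.
  case: (eqVneq j k) => [jk|jk]; first by subst k; rewrite ?eqxx /=; ring.
  by rewrite /=; ring.
rewrite !sumrB !sum_eq1 sumr_const card_ord; ring.
Qed.

Lemma seidel_sym n (adj : rel 'I_n) : simple_graph adj ->
  forall i j, seidel R adj i j = seidel R adj j i.
Proof.
move=> [sym _] i j; rewrite !mxE eq_sym sym; done.
Qed.

Lemma seidel_norm n (adj : rel 'I_n) i j : `|seidel R adj i j| = (i != j)%:R.
Proof.
rewrite mxE; case: eqP => _; first by rewrite normr0.
by case: (adj i j); rewrite ?normrN normr1.
Qed.

Lemma seidel_sq n (adj : rel 'I_n) i j : seidel R adj i j ^+ 2 = (i != j)%:R.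
Proof.
rewrite mxE; case: eqP => _; first by rewrite expr0n.
by case: (adj i j); rewrite ?sqrrN expr1n.
Qed.

Lemma seidelK n i j : seidel R (@complete_graph n) i j = - (i != j)%:R.
Proof. by rewrite mxE /complete_graph; case: eqP => _ /=; rewrite ?oppr0. Qed.

Lemma sq_diag n (adj : rel 'I_n) : simple_graph adj -> forall i,
  (seidel R adj *m seidel R adj) i i = n%:R - 1.
Proof.
move=> sg i; rewrite mxE -(sum_neq i); apply: eq_bigr => k _.
by rewrite (seidel_sym sg k i) -expr2 seidel_sq.
Qed.

Lemma sq_off n (adj : rel 'I_n) i j : i != j ->
  `|(seidel R adj *m seidel R adj) i j| <= n%:R - 2.
Proof.
move=> ij; rewrite mxE -(sum_neq2 ij); apply: le_trans (ler_norm_sum _ _ _) _.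
by apply: ler_sum => k _; rewrite normrM !seidel_norm.
Qed.

Lemma sqK n i j : (seidel R (@complete_graph n) *m seidel R (@complete_graph n)) i j
   = n%:R - 2 + (i == j)%:R.
Proof.
rewrite mxE; case: (eqVneq i j) => [<-|ij].
  rewrite -[n%:R - 2 + _]/(n%:R - 2 + 1).
  have -> : n%:R - 2 + 1 = n%:R - 1 :> R by ring.
  rewrite -(sum_neq i).
  by apply: eq_bigr => k _; rewrite !seidelK mulrNN eq_sym -natrM mulnb andbb.
rewrite addr0 -(sum_neq2 ij); apply: eq_bigr => k _; by rewrite !seidelK mulrNN.
Qed.

Lemma sq_le n (adj : rel 'I_n) : simple_graph adj -> forall i j,
  ((seidel R adj *m seidel R adj) i j) ^+ 2 <= (n%:R - 2 + (i == j)%:R) ^+ 2.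
Proof.
move=> sg i j; case: (eqVneq i j) => [<-|ij].
  rewrite sq_diag // -[n%:R - 2 + _]/(n%:R - 2 + 1).
  by have -> : n%:R - 2 + 1 = n%:R - 1 :> R by ring.
rewrite addr0 -real_normK ?num_real //.
have h := sq_off adj ij; have h0 := normr_ge0 ((seidel R adj *m seidel R adj) i j).
nra.
Qed.

Lemma sym_sq n (A : 'M[R]_n) : (forall i j, A i j = A j i) ->
  forall i j, (A *m A) i j = (A *m A) j i.
Proof.
move=> sA i j; rewrite !mxE; apply: eq_bigr => k _; by rewrite mulrC (sA k j) (sA i k).
Qed.

Lemma tr4 n (A : 'M[R]_n) : (forall i j, A i j = A j i) ->
  \tr ((A *m A) *m (A *m A)) = \sum_i \sum_j ((A *m A) i j) ^+ 2.
Proof.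
move=> sA; rewrite /mxtrace; apply: eq_bigr => i _; rewrite mxE.
by apply: eq_bigr => j _; rewrite (sym_sq sA j i) expr2.
Qed.

Lemma gersh n (A : 'M[R]_n) (hA : forall i j, `|A i j| = (i != j)%:R) a :
  eigenvalue A a -> a ^+ 2 <= (n%:R - 1) ^+ 2.
Proof.
move/eigenvalueP => [v Hv vnz].
have [j0 _] : exists j0 : 'I_n, true.
  case: n A v Hv vnz hA => [|n'] A v Hv vnz hA; last by exists ord0.
  by rewrite [v]thinmx0 eqxx in vnz.
set j := [arg max_(j > j0) (`|v 0 j| : R)]%O.
have jmax : forall i, `|v 0 i| <= `|v 0 j|.
  by rewrite /j; case: arg_maxP => // k _ H i; exact: H.
have vj0 : 0 < `|v 0 j|.
  rewrite normr_gt0; apply: contraNneq vnz => e; apply/eqP/rowP => i.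
  rewrite mxE; apply/eqP; rewrite -normr_eq0 eq_le normr_ge0 andbT.
  by rewrite -(normr0 R) -e; apply: jmax.
have key : `|a| * `|v 0 j| <= (n%:R - 1) * `|v 0 j|.
  have : (v *m A) 0 j = a * v 0 j by rewrite Hv mxE.
  rewrite mxE => E; rewrite -normrM -E.
  apply: le_trans (ler_norm_sum _ _ _) _.
  apply: (@le_trans _ _ (\sum_i `|v 0 j| * (j != i)%:R)).
    apply: ler_sum => i _; rewrite normrM hA eq_sym.
    by apply: ler_wpM2r => //; rewrite ler0n.
  by rewrite -mulr_sumr sum_neq mulrC.
have : `|a| <= n%:R - 1 by rewrite -(ler_pM2r vj0).
move=> h; rewrite -real_normK ?num_real //; have := normr_ge0 a; nra.
Qed.

End Seidel.

Theorem lemma3p1 (R : realType) (n : nat) (adj : rel 'I_n)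
  (theta phi : 'I_n -> R) :
  (0 < n)%N ->
  simple_graph adj ->
  char_poly (seidel R adj) = \prod_(i < n) ('X - (theta i)%:P) ->
  char_poly (seidel R (@complete_graph n)) = \prod_(i < n) ('X - (phi i)%:P) ->
  [/\ \sum_(i < n) theta i ^+ 2 = (n%:R - 1) ^+ 2 + n%:R - 1,
      \sum_(i < n) theta i ^+ 4 <= \sum_(i < n) phi i ^+ 4,
      \sum_(i < n) phi i ^+ 4 = (n%:R - 1) ^+ 4 + n%:R - 1,
      \big[Num.max/0]_(i < n) (theta i ^+ 2) <= \big[Num.max/0]_(i < n) (phi i ^+ 2)
    & \big[Num.max/0]_(i < n) (phi i ^+ 2) = (n%:R - 1) ^+ 2].
Proof.
move=> n0 sg HS HK.
set S := seidel R adj; set K := seidel R (@complete_graph n).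
have sgK : simple_graph (@complete_graph n).
  by split => [i j|i]; rewrite /complete_graph ?eqxx // eq_sym.
have e4 : forall x : R, x ^+ 4 = (x ^+ 2) ^+ 2 by move=> x; rewrite -exprM.
have HS2 := char_poly_sq HS; have HS4 := char_poly_sq HS2.
have HK2 := char_poly_sq HK; have HK4 := char_poly_sq HK2.
have T4S : \sum_i theta i ^+ 4 = \sum_i \sum_j ((S *m S) i j) ^+ 2.
  under eq_bigr do rewrite e4.
  by rewrite -(trace_roots n0 HS4) tr4 //; apply: seidel_sym.
have T4K : \sum_i phi i ^+ 4 = \sum_(i < n) \sum_(j < n) (n%:R - 2 + (i == j)%:R) ^+ 2.
  rewrite (eq_bigr (fun i => (phi i ^+ 2) ^+ 2)); last by move=> i _; rewrite e4.
  rewrite -(trace_roots n0 HK4) tr4; last exact: seidel_sym.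
  by apply: eq_bigr => i _; apply: eq_bigr => j _; rewrite sqK.
have rootK : exists i, phi i = 1 - n%:R.
  have : root (char_poly K) (1 - n%:R).
    rewrite -eigenvalue_root_char; apply/eigenvalueP.
    exists (const_mx 1); last first.
      apply/eqP => /rowP /(_ (Ordinal n0)); rewrite !mxE => /eqP.
      by rewrite oner_eq0.
    apply/rowP => j; rewrite !mxE mulr1.
    rewrite (eq_bigr (fun i => - (j != i)%:R)); last first.
      by move=> i _; rewrite !mxE /complete_graph [j == i]eq_sym; case: eqP => _ /=; rewrite ?mul1r ?oppr0.
    by rewrite sumrN sum_neq opprB.
  rewrite HK rootE horner_prod => /prodf_eq0 [i _].
  by rewrite hornerXsubC subr_eq0 => /eqP ->; exists i.
have maxK : \big[Num.max/0]_(i < n) (phi i ^+ 2) = (n%:R - 1) ^+ 2.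
  apply/eqP; rewrite eq_le; apply/andP; split.
    apply: bigmax_le; first exact: sqr_ge0.
    move=> i _; apply: (gersh (A:=K)); first by move=> i1 j1; rewrite /K seidelK normrN normr_nat.
    rewrite eigenvalue_root_char HK rootE horner_prod; apply/prodf_eq0.
    by exists i; rewrite // hornerXsubC subrr.
  have [i Hi] := rootK; apply: le_trans (le_bigmax _ _ i).
  by rewrite Hi; have -> : (1 - n%:R) ^+ 2 = (n%:R - 1) ^+ 2 :> R by ring.
split.
- rewrite -(trace_roots n0 HS2) /mxtrace.
  under eq_bigr do rewrite sq_diag //.
  by rewrite sumr_const card_ord -mulr_natl; ring.
- rewrite T4S T4K; apply: ler_sum => i _; apply: ler_sum => j _.
  exact: sq_le.
- rewrite T4K.
  have E : forall i : 'I_n, \sum_(j < n) (n%:R - 2 + (i == j)%:R) ^+ 2 =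
      n%:R * (n%:R - 2) ^+ 2 + (2 * (n%:R - 2) + 1) :> R.
    move=> i.
    rewrite (eq_bigr (fun j => (n%:R - 2) ^+ 2 + (2 * (n%:R - 2) + 1) * (i == j)%:R)); last first.
      by move=> j _; case: (i == j) => /=; ring.
    by rewrite big_split /= sumr_const card_ord -mulr_sumr sum_eq1 -mulr_natl; ring.
  under eq_bigr do rewrite E.
  by rewrite sumr_const card_ord -mulr_natl; ring.
- rewrite maxK; apply: bigmax_le; first exact: sqr_ge0.
  move=> i _; apply: gersh; first exact: seidel_norm.
  rewrite eigenvalue_root_char HS rootE horner_prod; apply/prodf_eq0.
  by exists i; rewrite // hornerXsubC subrr.
- exact: maxK.
Qed.
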